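(* Let $d\ge1$, let $\{1,\dots,d\}$ be partitioned into $\mathcal{D}$ and $\mathcal{U}$, let $\mu\in\mathbb{R}^d$, $s>0$, $\Sigma=s^2I$, $\alpha>0$, $\delta\in(0,1/2]$, $p_\delta=\Phi^{-1}(\delta)$ and $\beta\in(0,1)$. Suppose $$\|\mu_{\mathcal{D}}\|_2\ \ge\ \frac{\beta}{\sqrt{1-\beta^2}}\,\|\mu_{\mathcal{U}}\|_2 .$$ Then, if the problem $$\min_{e\in\mathbb{R}^d}\ \|e\|_2\quad\text{s.t.}\quad \alpha-\mu^\top e-p_\delta\|\Sigma^{1/2}e\|_2\le0$$ is feasible, its optimal solution (the agent's best response with $\ell_2$ cost) is a $\beta$-desirable effort profile.
   Context: $\Phi$ is the standard normal CDF. The constraint is equivalent to $\mathbb{P}_{Z\sim\mathcal{N}(\mu,\Sigma)}[Z^\top e\ge\alpha]\ge1-\delta$, where $Z$ is the agent's Gaussian belief about the vector $\mathbb{C}h$ of total feature contributions, here with all features having the same variance and no correlations. $\mathcal{D}$ is the set of desirable features and $\mathcal{U}$ the undesirable ones; $v_{\mathcal{D}}$ denotes the restriction of a vector $v$ to coordinates in $\mathcal{D}$. An effort profile $e$ is $\beta$-desirable if $\|e_{\mathcal{D}}\|_2\ge\beta\|e\|_2$. *)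

(* Defs.v *)
From HB Require Import structures.
From mathcomp Require Import all_boot all_order all_algebra.
From mathcomp Require Import all_classical all_reals all_analysis.
From mathcomp Require Import normal_distribution.
Set Implicit Arguments. Unset Strict Implicit. Unset Printing Implicit Defensive.
Import Order.TTheory GRing.Theory Num.Theory.
Local Open Scope classical_set_scope.
Local Open Scope ring_scope.

Definition Phi {R : realType} (x : R) : R :=
  fine (normal_prob 0 1 `]-oo, x]).

Definition l2norm {R : realType} {d : nat} (e : 'I_d -> R) : R :=
  Num.sqrt (\sum_(i < d) e i ^+ 2).

Definition restr_norm {R : realType} {d : nat} (A : {set 'I_d}) (e : 'I_d -> R) : R :=
  Num.sqrt (\sum_(i in A) e i ^+ 2).

Definition dotp {R : realType} {d : nat} (u v : 'I_d -> R) : R :=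
  \sum_(i < d) u i * v i.

(* Sigma = s^2 I, so Sigma^{1/2} e = s e (s > 0). *)
Definition sqrtSigma_app {R : realType} {d : nat} (s : R) (e : 'I_d -> R) : 'I_d -> R :=
  fun i => s * e i.

Definition feasible {R : realType} {d : nat} (mu : 'I_d -> R) (s alpha p : R)
  (e : 'I_d -> R) : Prop :=
  alpha - dotp mu e - p * l2norm (sqrtSigma_app s e) <= 0.

Definition optimal {R : realType} {d : nat} (mu : 'I_d -> R) (s alpha p : R)
  (e : 'I_d -> R) : Prop :=
  feasible mu s alpha p e /\
  forall e' : 'I_d -> R, feasible mu s alpha p e' -> l2norm e <= l2norm e'.

Definition desirable {R : realType} {d : nat} (beta : R) (D : {set 'I_d})
  (e : 'I_d -> R) : Prop :=
  beta * l2norm e <= restr_norm D e.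

(* Main.v *)
Require Import Defs.
From HB Require Import structures.
From mathcomp Require Import all_boot all_order all_algebra.
From mathcomp Require Import all_classical all_reals all_analysis.
From mathcomp Require Import normal_distribution measurable_realfun.
From mathcomp Require Import lra ring.
Import Order.TTheory GRing.Theory Num.Theory.
Local Open Scope ring_scope.

Section PhiSec.
Local Open Scope classical_set_scope.
Lemma npdfE (R : realType) (x : R) :
  normal_pdf 0 1 x = normal_peak 1 * expR (- x ^+ 2 / 2).
Proof.
rewrite /normal_pdf oner_eq0 /= /normal_fun subr0 expr1n.
done.
Qed.

Lemma half_prob (R : realType) :
  normal_prob (0:R) 1 [set x | 0 <= x] = (2^-1 : R)%:E.
Proof.
have := @ge0_symfun_integralT R (normal_pdf 0 1).
rewrite integral_normal_pdf.
move=> /(_ (fun x => normal_pdf_ge0 _ _ _) (@continuous_normal_pdf R 0 1 (oner_neq0 R))).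
have ev : normal_pdf (0:R) 1 =1 normal_pdf 0 1 \o -%R.
  by move=> x; rewrite /= !npdfE sqrrN.
move=> /(_ ev).
rewrite -/(normal_prob 0 1 _).
have fin : normal_prob (0:R) 1 [set x | 0 <= x] \is a fin_num.
  rewrite ge0_fin_numE; last exact: measure_ge0.
  apply: (le_lt_trans (probability_le1 _ _)); last exact: ltey.
  by rewrite -set_itvcy.
rewrite -(fineK fin) -EFinM => -[] h.
congr (_%:E); lra.
Qed.

Lemma prob_fin (R : realType) (A : set R) : measurable A ->
  normal_prob (0:R) 1 A \is a fin_num.
Proof.
move=> mA; rewrite ge0_fin_numE; last exact: measure_ge0.
by apply: (le_lt_trans (probability_le1 _ _)); last exact: ltey.
Qed.

Lemma aux (R : realType) (A B C : \bar R) : (0 <= A)%E -> (0 <= B)%E -> (0 <= C)%E ->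
  1%E = (A + B)%E -> (2^-1)%:E = (B + C)%E -> (0 < C)%E -> 2^-1 < fine A.
Proof.
case: A => [a||]; case: B => [b||]; case: C => [c||] //= ha hb hc; rewrite ?lee_fin ?lte_fin in ha hb hc * => //.
- by move=> [] h1 [] h2 h3; lra.
Qed.

Lemma Phi_pos (R : realType) (p : R) : 0 < p -> 2^-1 < Phi p.
Proof.
move=> p0.
set P := normal_prob (0:R) 1.
have e1 : P (`]-oo, p]%classic `|` `]p, +oo[%classic) = (P `]-oo, p]%classic + P `]p, +oo[%classic)%E.
  apply: measureU => //.
  rewrite -subset0 => x [] /=; rewrite !in_itv /= ?andbT; lra.
have e2 : P (`]p, +oo[%classic `|` `[0%R, p]%classic) = (P `]p, +oo[%classic + P `[0%R, p]%classic)%E.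
  apply: measureU => //.
  rewrite -subset0 => x [] /=; rewrite !in_itv /= ?andbT => ? /andP[]; lra.
have s1 : `]-oo, p]%classic `|` `]p, +oo[%classic = [set: R].
  apply/seteqP; split => x //= _; rewrite !in_itv /= andbT; case: (lerP x p); lra.
have s2 : `]p, +oo[%classic `|` `[0%R, p]%classic = [set x : R | 0 <= x].
  apply/seteqP; split => x /=; rewrite !in_itv /= ?andbT.
    case; lra.
  move=> x0; case: (lerP x p) => ?; [right|left] => //; apply/andP; lra.
rewrite s1 /P probability_setT -/P in e1.
have h2 : P (`]p, +oo[ `|` `[0%R, p]) = (2^-1)%:E by rewrite s2; exact: half_prob.
rewrite h2 in e2.
have pos : (0 < P `[0%R, p]%classic)%E.
  apply: (@lt_le_trans _ _ (\int[lebesgue_measure]_(x in `[0%R, p]%classic) (cst (normal_pdf 0 1 p)%:E x))%E).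
    rewrite integral_cst //= lebesgue_measure_itv /= lte_fin p0. idtac.
    rewrite -EFinD -EFinM lte_fin oppr0 addr0 mulr_gt0 // npdfE mulr_gt0 ?expR_gt0 // normal_peak_gt0 //.
  apply: ge0_le_integral => //.
  - by move=> x _ /=; rewrite lee_fin normal_pdf_ge0.
  - by apply/measurable_EFinP; apply: measurable_funTS; exact: measurable_normal_pdf.
  - move=> x /=; rewrite in_itv /= => /andP[x0 xp].
    rewrite lee_fin !npdfE ler_wpM2l ?normal_peak_ge0 // ler_expR.
    rewrite ler_pM2r // ?invr_gt0 //; rewrite lerN2; nra.
by rewrite /Phi; apply: (@aux R _ _ _ _ _ _ e1 e2 pos); exact: measure_ge0.
Qed.

End PhiSec.

Section vec.
Variables (R : realType) (d : nat).
Implicit Types (e v mu : 'I_d -> R).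

Lemma expand (x y : R) e mu :
  \sum_(i < d) (x * e i - y * mu i) ^+ 2 =
  x ^+ 2 * \sum_(i < d) e i ^+ 2 - 2 * x * y * dotp mu e + y ^+ 2 * \sum_(i < d) mu i ^+ 2.
Proof.
transitivity (\sum_(i < d) ((x ^+ 2 * e i ^+ 2 - 2 * x * y * (mu i * e i)) + y ^+ 2 * mu i ^+ 2)).
  by apply: eq_bigr => i _; ring.
by rewrite big_split /= sumrB /dotp !mulr_sumr.
Qed.

Lemma sumsq_ge0 (P : pred 'I_d) v : 0 <= \sum_(i | P i) v i ^+ 2.
Proof. by apply: sumr_ge0 => i _; exact: sqr_ge0. Qed.

Lemma sumsq_eq0 v : \sum_(i < d) v i ^+ 2 = 0 -> forall i, v i = 0.
Proof.
move=> h i.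
have H := @psumr_eq0P R _ predT (fun j => v j ^+ 2) (fun j _ => sqr_ge0 (v j)) h i isT.
by move: H => /eqP; rewrite sqrf_eq0 => /eqP.
Qed.

Lemma l2norm_scale (t : R) v : l2norm (fun i => t * v i) = `|t| * l2norm v.
Proof.
rewrite /l2norm; under eq_bigr do rewrite exprMn.
by rewrite -mulr_sumr sqrtrM ?sqr_ge0 // sqrtr_sqr.
Qed.

Lemma restr_norm_scale (A : {set 'I_d}) (t : R) v :
  restr_norm A (fun i => t * v i) = `|t| * restr_norm A v.
Proof.
rewrite /restr_norm; under eq_bigr do rewrite exprMn.
by rewrite -mulr_sumr sqrtrM ?sqr_ge0 // sqrtr_sqr.
Qed.

Lemma l2norm_sq v : l2norm v ^+ 2 = \sum_(i < d) v i ^+ 2.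
Proof. by rewrite /l2norm sqr_sqrtr // sumsq_ge0. Qed.

Lemma CS mu e : 0 < \sum_(i < d) mu i ^+ 2 -> dotp mu e <= l2norm mu * l2norm e.
Proof.
move=> Sm0.
have h := expand (\sum_(i < d) mu i ^+ 2) (dotp mu e) e mu.
have h0 : 0 <= \sum_(i < d) ((\sum_(i < d) mu i ^+ 2) * e i - dotp mu e * mu i) ^+ 2.
  by apply: sumr_ge0 => i _; exact: sqr_ge0.
rewrite h in h0.
have a2 := l2norm_sq mu; have b2 := l2norm_sq e.
have a0 : 0 <= l2norm mu by exact: sqrtr_ge0.
have b0 : 0 <= l2norm e by exact: sqrtr_ge0.
set Sm := \sum_(i < d) mu i ^+ 2 in Sm0 h0 a2.
set Se := \sum_(i < d) e i ^+ 2 in h0 b2.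
set dt := dotp mu e in h0 *.
have h1 : 0 <= Sm * (Sm * Se - dt ^+ 2) by nra.
have h2 : dt ^+ 2 <= Sm * Se.
  by rewrite -subr_ge0; rewrite (pmulr_rge0 _ Sm0) in h1.
have : dt ^+ 2 <= (l2norm mu * l2norm e) ^+ 2 by rewrite exprMn a2 b2.
have X0 : 0 <= l2norm mu * l2norm e by rewrite mulr_ge0.
move: X0; generalize (l2norm mu * l2norm e) => X X0 h3.
nra.
Qed.
End vec.

Theorem corollary2 (R : realType) (d : nat) (D : {set 'I_d}) (mu : 'I_d -> R)
    (s alpha delta p beta : R) :
  (0 < d)%N ->
  0 < s ->
  0 < alpha ->
  0 < delta -> delta <= 1 / 2 ->
  Phi p = delta ->
  0 < beta -> beta < 1 ->
  beta / Num.sqrt (1 - beta ^+ 2) * restr_norm (~: D) mu <= restr_norm D mu ->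
  (exists e : 'I_d -> R, feasible mu s alpha p e) ->
  (exists e : 'I_d -> R, optimal mu s alpha p e) /\
  (forall e : 'I_d -> R, optimal mu s alpha p e -> desirable beta D e).
Proof.
move=> d0 s0 a0 dl0 dlh Php b0 b1 hyp [e0 fe0].
have p0 : p <= 0.
  rewrite leNgt; apply/negP => pp; have := @Phi_pos R p pp; rewrite Php; lra.
have k0 : p * s <= 0 by nra.
have hfeas : forall e, feasible mu s alpha p e <-> alpha <= dotp mu e + (p * s) * l2norm e.
  move=> e; rewrite /feasible /sqrtSigma_app l2norm_scale gtr0_norm // -mulrA.
  by split; lra.
move: k0 hfeas; generalize (p * s) => k k0 hfeas.
have nn : forall v : 'I_d -> R, 0 <= l2norm v by move=> v; exact: sqrtr_ge0.
have Sm0 : 0 < \sum_(i < d) mu i ^+ 2.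
  rewrite lt_def (@sumsq_ge0 R d predT mu) andbT; apply/eqP => h.
  have z := @sumsq_eq0 R d mu h.
  have : dotp mu e0 = 0 by rewrite /dotp big1 // => i _; rewrite z mul0r.
  move/hfeas: fe0 => fe0 dz; rewrite dz in fe0; have := nn e0; nra.
have m0 : 0 < l2norm mu by rewrite sqrtr_gt0.
have m2 := @l2norm_sq R d mu.
have cs : forall e, dotp mu e <= l2norm mu * l2norm e.
  by move=> e; exact: (@CS R d mu e Sm0).
move: m0 m2 cs; set m := l2norm mu => m0 m2 cs.
have mk : 0 < m + k.
  move/hfeas: fe0 => fe0; have := cs e0; have := nn e0; nra.
have low : forall e, feasible mu s alpha p e -> alpha / (m + k) <= l2norm e.
  move=> e /hfeas fe; rewrite ler_pdivrMr //; have := cs e; nra.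
set c := alpha / (m * (m + k)).
have c0 : 0 < c by rewrite divr_gt0 // mulr_gt0.
set es := fun i => c * mu i.
have nes : l2norm es = alpha / (m + k).
  rewrite /es l2norm_scale gtr0_norm // -/m /c; field.
  by rewrite gt_eqF // gt_eqF.
have des : dotp mu es = c * m ^+ 2.
  rewrite m2 /dotp /es mulr_sumr; apply: eq_bigr => i _; ring.
have fes : feasible mu s alpha p es.
  apply/hfeas; rewrite des nes; rewrite [X in _ <= X](_ : _ = alpha) //; rewrite /c; field.
  by rewrite gt_eqF // gt_eqF.
split.
  by exists es; split => // e' fe'; rewrite nes; exact: low.
move=> e [fe opt].
have ub := opt es fes; rewrite nes in ub.
have lb := low e fe.
have nb := nn e.
move/hfeas: fe => fe; have csb := cs e.
move: ub lb nb fe csb; set b := l2norm e => ub lb nb fe csb.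
have beq : b = alpha / (m + k) by apply/le_anti/andP.
have hb : b * (m + k) = alpha by rewrite beq; field; rewrite gt_eqF.
have dt : dotp mu e = m * b by nra.
set t := b / m.
have zero : \sum_(i < d) (1 * e i - t * mu i) ^+ 2 = 0.
  rewrite (@expand R d 1 t e mu) dt -m2 -(@l2norm_sq R d e) -/b /t; field.
  by rewrite gt_eqF.
have ei : forall i, e i = t * mu i.
  move=> i; have := @sumsq_eq0 R d (fun i => 1 * e i - t * mu i) zero i.
  by rewrite mul1r => /eqP; rewrite subr_eq0 => /eqP.
have -> : e = (fun i => t * mu i) by apply/funext.
rewrite /desirable l2norm_scale restr_norm_scale -/m.
suff key : beta * m <= restr_norm D mu.
  by rewrite mulrCA; apply: ler_wpM2l.
have hsplit : \sum_(i < d) mu i ^+ 2 = \sum_(i in D) mu i ^+ 2 + \sum_(i in ~: D) mu i ^+ 2.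
  rewrite (bigID (fun i => i \in D)) /=; congr (_ + _); apply: eq_bigl => i; rewrite ?inE //.
have rD2 : restr_norm D mu ^+ 2 = \sum_(i in D) mu i ^+ 2.
  by rewrite /restr_norm sqr_sqrtr // sumr_ge0 // => i _; exact: sqr_ge0.
have rU2 : restr_norm (~: D) mu ^+ 2 = \sum_(i in ~: D) mu i ^+ 2.
  by rewrite /restr_norm sqr_sqrtr // sumr_ge0 // => i _; exact: sqr_ge0.
have rD0 : 0 <= restr_norm D mu by exact: sqrtr_ge0.
have rU0 : 0 <= restr_norm (~: D) mu by exact: sqrtr_ge0.
have bb : 0 < 1 - beta ^+ 2 by nra.
have q0 : 0 < Num.sqrt (1 - beta ^+ 2) by rewrite sqrtr_gt0.
have q2 : Num.sqrt (1 - beta ^+ 2) ^+ 2 = 1 - beta ^+ 2 by rewrite sqr_sqrtr // ltW.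
rewrite mulrAC ler_pdivrMr // in hyp.
move: hyp rD2 rU2 rD0 rU0 q0 q2 hsplit m2.
generalize (restr_norm D mu) (restr_norm (~: D) mu) (Num.sqrt (1 - beta ^+ 2))
  (\sum_(i in D) mu i ^+ 2) (\sum_(i in ~: D) mu i ^+ 2) (\sum_(i < d) mu i ^+ 2).
move=> rD rU q SD SU Sm hyp rD2 rU2 rD0 rU0 q0 q2 hsplit m2.
have h2 : (beta * rU) ^+ 2 <= (rD * q) ^+ 2.
  by rewrite ler_pXn2r // ?nnegrE ?mulr_ge0 // ltW.
have h3 : (beta * m) ^+ 2 <= rD ^+ 2.
  rewrite exprMn rD2 m2 hsplit; rewrite !exprMn rU2 rD2 q2 in h2; nra.
by rewrite -(@ler_pXn2r _ 2) // ?nnegrE ?mulr_ge0 // ltW.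
Qed.
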